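(* Let $r\ge2$, $\ell\ge1$, and let $C=(w_1,\dots,w_{2\ell+1})$ be a semi-valid tuple in $\Omega_n$ with $|[w_i,w_{i-1}]|\ge r$ for all $i$ (indices mod $2\ell+1$). Then $H_n^{(r)}(C)$ is $M_1^{(r)}$-saturated.
   Context: $\Omega_n=\{v_0,\dots,v_{n-1}\}$ with cyclic order $v_0<\dots<v_{n-1}<v_0$. For distinct vertices $u,w$, $(u,w)$ is the set of vertices strictly between $u$ and $w$ moving clockwise from $u$ to $w$, and $[u,w]=(u,w)\cup\{u,w\}$. A tuple of distinct vertices $C=(w_1,\dots,w_{2\ell+1})$ is semi-valid if $w_1<w_3<\dots<w_{2\ell+1}<w_2<w_4<\dots<w_{2\ell}<w_1$ in clockwise cyclic order. $H_n^{(r)}(C)=\{e\in\binom{\Omega_n}{r}: e\cap[w_i,w_{i-1}]\neq\emptyset\ \forall i\}$. $M_1^{(r)}$ is the $r$-cgh consisting of two geometrically disjoint edges $\{v_0,\dots,v_{r-1}\},\{v_r,\dots,v_{2r-1}\}$; an $r$-cgh $H$ on $\Omega_n$ contains a copy of it iff there are edges $h_1,h_2\in H$ and vertices $u\neq u'$ with $h_1\subseteq[u,u']$, $h_2\cap[u,u']=\emptyset$. $H$ is $M_1^{(r)}$-saturated if it contains no copy, but $H\cup\{e\}$ contains one for every $e\in\binom{\Omega_n}{r}\setminus H$. *)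

(* Defs.v *)
From mathcomp Require Import all_boot.
Set Implicit Arguments. Unset Strict Implicit. Unset Printing Implicit Defensive.

(* Omega_n = 'I_n, vertex v_i = i, clockwise order = increasing index mod n. *)

(* closed clockwise interval [u,w] = {u, u+1, ..., w} (indices mod n) *)
Definition cinterval (n : nat) (u w : 'I_n) : {set 'I_n} :=
  [set x : 'I_n | (x + n - u) %% n <= (w + n - u) %% n].

(* a sequence of distinct vertices listed in clockwise cyclic order:
   some rotation of it is strictly increasing *)
Definition cyc_ordered (n : nat) (s : seq 'I_n) : Prop :=
  exists k, sorted ltn (map val (rot k s)).

(* C = (w_1,...,w_{2l+1}) is encoded 0-indexed as w : 'I_(2l+1) -> 'I_n,
   w_j (1-indexed) = w (j-1). *)
Definition semi_valid (n l : nat) (w : 'I_(l.*2.+1) -> 'I_n) : Prop :=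
  injective w /\
  cyc_ordered ([seq w (inord (i.*2)) | i <- iota 0 l.+1] ++
               [seq w (inord (i.*2.+1)) | i <- iota 0 l]).

Definition cprev (l : nat) (i : 'I_(l.*2.+1)) : 'I_(l.*2.+1) :=
  inord ((i + l.*2) %% l.*2.+1).

Definition HC (n r l : nat) (w : 'I_(l.*2.+1) -> 'I_n) : {set {set 'I_n}} :=
  [set e : {set 'I_n} | (#|e| == r) &&
     [forall i, e :&: cinterval (w i) (w (cprev i)) != set0]].

Definition contains_M1 (n : nat) (H : {set {set 'I_n}}) : Prop :=
  exists h1 h2 (u u' : 'I_n), [/\ h1 \in H, h2 \in H, u != u',
     h1 \subset cinterval u u' & h2 :&: cinterval u u' = set0].

Definition M1_saturated (n r : nat) (H : {set {set 'I_n}}) : Prop :=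
  ~ contains_M1 H /\
  forall e : {set 'I_n}, #|e| = r -> e \notin H -> contains_M1 (e |: H).

(* Main.v *)
Require Import Defs.
From mathcomp Require Import all_boot zify.
Set Implicit Arguments. Unset Strict Implicit. Unset Printing Implicit Defensive.

Lemma mod2E (x N : nat) : x < N + N -> x %% N = if x < N then x else x - N.
Proof.
move=> hx; case: ifP => h; first by rewrite modn_small.
have -> : x = (x - N) + N by lia.
rewrite modnDr modn_small; lia.
Qed.

Lemma distE n (u x : 'I_n) : (x + n - u) %% n = if u <= x then x - u else x + n - u.
Proof.
have hx := ltn_ord x; have hu := ltn_ord u.
rewrite mod2E; last by lia.
case: ifP; case: ifP; lia.
Qed.

Lemma cint_rel n (u a b x : 'I_n) :
  (x \in cinterval a b) =
  (((a + n - u) %% n <= (b + n - u) %% n) &&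
     ((a + n - u) %% n <= (x + n - u) %% n <= (b + n - u) %% n))
  || (((b + n - u) %% n < (a + n - u) %% n) &&
     (((a + n - u) %% n <= (x + n - u) %% n) || ((x + n - u) %% n <= (b + n - u) %% n))).
Proof.
rewrite inE !distE.
have hx := ltn_ord x; have hu := ltn_ord u; have ha := ltn_ord a; have hb := ltn_ord b.
case: (leqP u a); case: (leqP u b); case: (leqP u x); case: (leqP a x); case: (leqP a b); lia.
Qed.

Lemma dist_inj n (u x y : 'I_n) : (x + n - u) %% n = (y + n - u) %% n -> x = y.
Proof.
rewrite !distE => h; apply: val_inj => /=.
have hx := ltn_ord x; have hu := ltn_ord u; have hy := ltn_ord y.
move: h; case: (leqP u x); case: (leqP u y); lia.
Qed.

Lemma nth_rotE T (x0 : T) (s : seq T) k i : k <= size s -> i < size s ->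
  nth x0 (rot k s) i = nth x0 s ((i + k) %% size s).
Proof.
move=> hk hi; rewrite /rot nth_cat size_drop mod2E; last by lia.
case: ifP => h1.
  rewrite nth_drop ifT; [congr nth; lia | lia].
rewrite nth_take; last by lia.
rewrite ifF; [congr nth; lia | lia].
Qed.

Definition dst n (u x : 'I_n) : nat := (x + n - u) %% n.

Lemma cintE n (a b x : 'I_n) : (x \in cinterval a b) = (dst a x <= dst a b).
Proof. by rewrite inE. Qed.

Lemma cint_relD n (u a b x : 'I_n) :
  (x \in cinterval a b) =
  ((dst u a <= dst u b) && (dst u a <= dst u x <= dst u b))
  || ((dst u b < dst u a) && ((dst u a <= dst u x) || (dst u x <= dst u b))).
Proof. exact: cint_rel. Qed.

Lemma dst_inj n (u x y : 'I_n) : dst u x = dst u y -> x = y.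
Proof. exact: dist_inj. Qed.

Lemma dst0 n (u : 'I_n) : dst u u = 0.
Proof. by rewrite /dst addKn modnn. Qed.

Lemma F1 n l (q : nat -> 'I_n) (u : 'I_n) j s s' :
  (forall a b, a < b -> b < l.*2.+1 -> q a < q b) ->
  j < l.*2.+1 ->
  (forall c, c < l.*2.+1 -> dst u (q j) <= dst u (q c)) ->
  s <= s' -> s' < l.*2.+1 ->
  dst u (q ((j+s) %% l.*2.+1)) <= dst u (q ((j+s') %% l.*2.+1)).
Proof.
rewrite /dst.
set N := l.*2.+1 => Hq hj Hmin hs hs'.
have mono x y : x <= y -> y < N -> q x <= q y.
  rewrite leq_eqVlt => /orP [/eqP -> //|]; move=> h1 h2; exact: ltnW (Hq _ _ h1 h2).
have smono x y : x < y -> y < N -> q x < q y by exact: Hq.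
have hA : (j + s) %% N < N by rewrite ltn_mod.
have hB : (j + s') %% N < N by rewrite ltn_mod.
have mA := Hmin _ hA; have mB := Hmin _ hB.
move: mA mB.
rewrite (mod2E (x := j + s)); last by lia.
rewrite (mod2E (x := j + s')); last by lia.
clear hA hB.
have hu := ltn_ord u.
case: ifP => h1; case: ifP => h2; move: hu.
- have := mono (j+s) (j+s') ltac:(lia) ltac:(lia).
  have := mono j (j+s) ltac:(lia) ltac:(lia).
  have := ltn_ord (q (j+s')); have := ltn_ord (q j).
  clear Hmin Hq; move=> + + + + + hu; rewrite !distE.
  case: (leqP u (q j)); case: (leqP u (q (j+s))); case: (leqP u (q (j+s'))); lia.
- have := smono (j+s'-N) j ltac:(lia) ltac:(lia).
  have := mono j (j+s) ltac:(lia) ltac:(lia).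
  have := ltn_ord (q (j+s)); have := ltn_ord (q (j+s'-N)); have := ltn_ord (q j).
  clear Hmin Hq; move=> + + + + + hu; rewrite !distE.
  case: (leqP u (q j)); case: (leqP u (q (j+s))); case: (leqP u (q (j+s'-N))); lia.
- lia.
- have := smono (j+s'-N) j ltac:(lia) ltac:(lia).
  have := mono (j+s-N) (j+s'-N) ltac:(lia) ltac:(lia).
  have := ltn_ord (q (j+s-N)); have := ltn_ord (q (j+s'-N)); have := ltn_ord (q j).
  clear Hmin Hq; move=> + + + + + hu; rewrite !distE.
  case: (leqP u (q j)); case: (leqP u (q (j+s-N))); case: (leqP u (q (j+s'-N))); lia.
Qed.

Lemma ext_set (T : finType) (X Y : {set T}) k :
  X \subset Y -> #|X| <= k -> k <= #|Y| -> exists2 Z : {set T}, X \subset Z /\ Z \subset Y & #|Z| = k.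
Proof.
move=> hXY h1 h2; have [m hm] : exists m, k = #|X| + m by exists (k - #|X|); lia.
subst k; clear h1.
elim: m X hXY h2 => [|m IH] X hXY h2.
  by exists X; rewrite ?addn0.
have : 0 < #|Y :\: X|.
  rewrite cardsD (setIidPr hXY). lia.
rewrite card_gt0 => /set0Pn [y]; rewrite inE => /andP [hyX hyY].
have hX' : y |: X \subset Y by rewrite subUset sub1set hyY hXY.
have cX' : #|y |: X| = #|X|.+1 by rewrite cardsU1 hyX.
have [Z [hZ1 hZ2] hZ3] := IH (y |: X) hX' ltac:(lia).
exists Z; last by rewrite hZ3 cX' addSnnS.
split => //; apply: subset_trans hZ1; exact: subsetUr.
Qed.

Lemma dist0 n (u : 'I_n) : (u + n - u) %% n = 0.
Proof. by rewrite addKn modnn. Qed.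

Lemma memI n l (q : nat -> 'I_n) (c : 'I_(l.*2.+1)) s :
  (forall a b, a < b -> b < l.*2.+1 -> q a < q b) -> s <= l ->
  q ((c + s) %% l.*2.+1) \in cinterval (q c) (q ((c + l) %% l.*2.+1)).
Proof.
move=> Hq hs.
have Hmin : forall c', c' < l.*2.+1 -> dst (q c) (q c) <= dst (q c) (q c').
  by move=> c' _; rewrite dst0.
have := F1 (u := q c) Hq (ltn_ord c) Hmin hs ltac:(lia).
rewrite cintE => h; apply: leq_trans h _.
by [].
Qed.

Lemma core n l r (q : nat -> 'I_n) :
  2 <= r -> 1 <= l ->
  (forall a b, a < b -> b < l.*2.+1 -> q a < q b) ->
  (forall a : 'I_(l.*2.+1), r <= #|cinterval (q a) (q ((a + l) %% l.*2.+1))|) ->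
  M1_saturated r [set e : {set 'I_n} | (#|e| == r) &&
     [forall a : 'I_(l.*2.+1), e :&: cinterval (q a) (q ((a + l) %% l.*2.+1)) != set0]].
Proof.
move=> hr hl Hq Hsz; split.
- move=> [h1 [h2 [u [u' [Hh1 Hh2 _ Hsub Hdis]]]]].
  move: Hh1 Hh2; rewrite !inE => /andP [_ /forallP F1h] /andP [_ /forallP F2h].
  case: (arg_minnP (fun c : 'I_(l.*2.+1) => dst u (q c)) (P := xpredT) (i0 := ord0) isT) => j _ Hj.
  have Hmin : forall c, c < l.*2.+1 -> dst u (q j) <= dst u (q c).
    by move=> c hc; exact: (Hj (Ordinal hc)).
  case: (leqP (dst u (q ((j + l) %% l.*2.+1))) (dst u u')) => hc.
  + have := F2h j; case/set0Pn => x; rewrite inE => /andP [hx2 hxI].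
    have hxA : x \in cinterval u u'.
      move: hxI; rewrite (cint_relD u) cintE.
      have := Hmin _ (ltn_ord j); have := Hmin _ (ltn_pmod (j + l) (ltn0Sn _)).
      move: hc; lia.
    have : x \in h2 :&: cinterval u u' by rewrite inE hx2 hxA.
    by rewrite Hdis inE.
  + have ha : (j + l) %% l.*2.+1 < l.*2.+1 by rewrite ltn_mod.
    have := F1h (Ordinal ha); case/set0Pn => x; rewrite inE => /andP [hx1 hxI].
    have hxA := subsetP Hsub _ hx1.
    move: hxI hxA; rewrite /= modnDml -addnA addnn (cint_relD u) cintE.
    have := F1 (u := u) (s := l) (s' := l.*2) Hq (ltn_ord j) Hmin ltac:(lia) ltac:(lia).
    move: hc; lia.
- move=> e He Hn.
  rewrite inE He eqxx /= negb_forall in Hn; case/existsP: Hn => a; rewrite negbK => /eqP Hea.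
  set b := (a + l) %% l.*2.+1.
  have hqa : q a \in cinterval (q a) (q b) by rewrite cintE dst0.
  have hqb : q b \in cinterval (q a) (q b) by rewrite cintE.
  have [h [hh1 hh2] hh3] : exists2 h : {set 'I_n}, [set q a; q b] \subset h /\ h \subset cinterval (q a) (q b) & #|h| = r.
    apply: ext_set; first by rewrite subUset !sub1set hqa hqb.
      by rewrite cards2; case: (q a != q b); lia.
    exact: Hsz.
  have hH : h \in [set e : {set 'I_n} | (#|e| == r) &&
     [forall a : 'I_(l.*2.+1), e :&: cinterval (q a) (q ((a + l) %% l.*2.+1)) != set0]].
    rewrite inE hh3 eqxx /=; apply/forallP => c.
    have hA : q a \in h by apply: (subsetP hh1); rewrite !inE eqxx.
    have hB : q b \in h by apply: (subsetP hh1); rewrite !inE eqxx orbT.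
    have hac := ltn_ord a; have hcc := ltn_ord c.
    case: (leqP (if c <= a then a - c else a + l.*2.+1 - c) l) => hs.
    + apply/set0Pn; exists (q a); rewrite inE hA /=.
      have -> : (a : nat) = (c + (if c <= a then a - c else a + l.*2.+1 - c)) %% l.*2.+1.
        rewrite mod2E; last by case: ifP; lia.
        case: ifP; case: ifP; lia.
      exact: memI.
    + apply/set0Pn; exists (q b); rewrite inE hB /=.
      have -> : b = (c + ((if c <= a then a - c else a + l.*2.+1 - c) - l.+1)) %% l.*2.+1.
        rewrite /b mod2E; last by lia.
        rewrite [RHS]mod2E; last by case: ifP; lia.
        move: hs; case: ifP; case: ifP; case: ifP; lia.
      apply: memI => //; move: hs; case: ifP; lia.
  have [x [y [hx hy hxy]]] : exists x y, [/\ x \in e, y \in e & x != y].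
    by apply/card_gt1P; rewrite He.
  case: (arg_minnP (fun z : 'I_n => dst (q a) z) hx) => u hu Hu.
  case: (arg_maxnP (fun z : 'I_n => dst (q a) z) hx) => u' hu' Hu'.
  have hnot : forall z, z \in e -> dst (q a) (q b) < dst (q a) z.
    move=> z hz; rewrite ltnNge; apply/negP => hzI.
    have : z \in e :&: cinterval (q a) (q b) by rewrite inE hz cintE.
    by rewrite Hea inE.
  exists e, h, u, u'; split.
  + exact: setU11.
  + by apply/setU1P; right.
  + apply/eqP => Huu; move: (Hu _ hx) (Hu' _ hx) (Hu _ hy) (Hu' _ hy); rewrite Huu => a1 a2 a3 a4.
    have ex : x = u' by apply: (@dst_inj _ (q a)); clear -a1 a2 a3 a4; lia.
    have ey : y = u' by apply: (@dst_inj _ (q a)); clear -a1 a2 a3 a4; lia.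
    by move: hxy; rewrite ex ey eqxx.
  + apply/subsetP => z hz; rewrite (cint_relD (q a)).
    have A1 := Hu _ hz; have A2 := Hu' _ hz; have A3 := Hu _ hu'; clear -A1 A2 A3; lia.
  + apply/setP => z; rewrite inE in_set0; apply/negbTE/negP => /andP [hz hzc].
    have A1 := hnot _ hu; have A2 := Hu _ hu'.
    move: (subsetP hh2 _ hz) hzc; rewrite cintE (cint_relD (q a)).
    clear -A1 A2; lia.
Qed.

Lemma idx1 l a k : a < l.*2.+1 -> k < l.*2.+1 ->
  ((2*((a+k) %% l.*2.+1)) %% l.*2.+1 + l.*2) %% l.*2.+1 =
  (2*(((a+l) %% l.*2.+1 + k) %% l.*2.+1)) %% l.*2.+1.
Proof.
set N := l.*2.+1 => ha hk.
have hN : N = l.*2.+1 by [].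
have h1 := mod2E (x := a + k) (N := N) ltac:(lia).
set y1 := (a + k) %% N in h1 *; clearbody y1.
have h2 := mod2E (x := 2 * y1) (N := N) ltac:(rewrite h1; case: ifP; lia).
set y2 := (2 * y1) %% N in h2 *; clearbody y2.
have h3 := mod2E (x := y2 + l.*2) (N := N) ltac:(rewrite h2 h1; case: ifP; case: ifP; lia).
set y3 := (y2 + l.*2) %% N in h3 *; clearbody y3.
have h4 := mod2E (x := a + l) (N := N) ltac:(lia).
set y4 := (a + l) %% N in h4 *; clearbody y4.
have h5 := mod2E (x := y4 + k) (N := N) ltac:(rewrite h4; case: ifP; lia).
set y5 := (y4 + k) %% N in h5 *; clearbody y5.
have h6 := mod2E (x := 2 * y5) (N := N) ltac:(rewrite h5 h4; case: ifP; case: ifP; lia).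
set y6 := (2 * y5) %% N in h6 *; clearbody y6.
move: h1 h2 h3 h4 h5 h6.
case: ifP => c1 ->; case: ifP => c2 ->; case: ifP => c3 ->; case: ifP => c4 ->;
  case: ifP => c5 ->; case: ifP => c6 ->; lia.
Qed.

Lemma idx2 l i k : i < l.*2.+1 -> k < l.*2.+1 ->
  (2*(((i*(l+1) + (l.*2.+1 - k)) %% l.*2.+1 + k) %% l.*2.+1)) %% l.*2.+1 = i.
Proof.
set N := l.*2.+1 => hi hk.
rewrite modnDml modnMmr.
have -> : 2 * (i * (l + 1) + (N - k) + k) = (i + 2) * N + i by rewrite /N; nia.
by rewrite modnMDl modn_small.
Qed.

Theorem lemma3p3 (n r l : nat) (w : 'I_(l.*2.+1) -> 'I_n) :
  2 <= r -> 1 <= l -> semi_valid w ->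
  (forall i : 'I_(l.*2.+1), r <= #|cinterval (w i) (w (cprev i))|) ->
  M1_saturated r (HC r w).
Proof.
move=> hr hl [winj [k Hk]] Hsz.
set N := l.*2.+1.
set s := [seq w (inord (i.*2)) | i <- iota 0 l.+1] ++ [seq w (inord (i.*2.+1)) | i <- iota 0 l] in Hk.
have hsz : size s = N by rewrite size_cat !size_map !size_iota /N; lia.
have [k0 hk0 Hs] : exists2 k0, k0 < N & sorted ltn (map val (rot k0 s)).
  case: (ltnP k N) => hkN; first by exists k.
  rewrite rot_oversize ?hsz // in Hk; by exists 0; rewrite ?rot0.
have Hnth : forall x, x < N -> nth (w ord0) s x = w (inord ((2 * x) %% N)).
  move=> x hx; rewrite nth_cat size_map size_iota.
  case: ifP => h.
    rewrite (nth_map 0) ?size_iota // nth_iota // add0n modn_small; last by rewrite /N; lia.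
    by rewrite mul2n.
  rewrite (nth_map 0) ?size_iota; last by rewrite /N in hx; lia.
  rewrite nth_iota; last by rewrite /N in hx; lia.
  rewrite mod2E; last by rewrite /N; lia.
  rewrite ifF; last by rewrite /N; lia.
  congr (w (inord _)); rewrite /N; lia.
pose q j := w (inord ((2 * ((j + k0) %% N)) %% N)).
have Hq : forall a b, a < b -> b < N -> q a < q b.
  move=> a b hab hb.
  have hrot : forall x, x < N -> nth 0 (map val (rot k0 s)) x = q x.
    move=> x hx; rewrite (nth_map (w ord0)) ?size_rot ?hsz //.
    rewrite nth_rotE ?hsz //; last by rewrite ltnW.
    by rewrite Hnth // ltn_mod.
  rewrite -!hrot //; last by apply: ltn_trans hb.
  apply: (sorted_ltn_nth ltn_trans) => //; rewrite inE size_map size_rot hsz //.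
  exact: ltn_trans hb.
have corr1 : forall a : 'I_N, exists i, w i = q a /\ w (cprev i) = q ((a + l) %% N).
  move=> a; exists (inord ((2 * ((a + k0) %% N)) %% N)); split => //.
  rewrite /cprev /q inordK; last by rewrite ltn_mod.
  by rewrite idx1.
have corr2 : forall i : 'I_N, exists a : 'I_N, w i = q a /\ w (cprev i) = q ((a + l) %% N).
  move=> i.
  have ha : (i * (l + 1) + (N - k0)) %% N < N by rewrite ltn_mod.
  have e1 : (2 * (((i * (l + 1) + (N - k0)) %% N + k0) %% N)) %% N = i by rewrite idx2.
  exists (Ordinal ha); rewrite /q /=; split.
    by rewrite e1 inord_val.
  by rewrite /cprev -idx1 // e1.
have -> : HC r w = [set e : {set 'I_n} | (#|e| == r) &&
     [forall a : 'I_N, e :&: cinterval (q a) (q ((a + l) %% N)) != set0]].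
  apply/setP => e; rewrite !inE; congr (_ && _); apply/forallP/forallP => H x.
    by have [i [<- <-]] := corr1 x; exact: H.
  by have [a [-> ->]] := corr2 x; exact: H.
apply: core => // a.
by have [i [<- <-]] := corr1 a.
Qed.
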